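(* Let $X$ and $Y$ be real Banach spaces with $Y\neq\{0\}$. Then $\{\gamma\in F_Y(X):\gamma(T)=0\ \text{for all}\ T\in L(X,Y)\}=\ker(\beta_X^Y)$.
   Context: $Lip_0(X,Y)$ is the Banach space of Lipschitz maps $f:X\to Y$ with $f(0)=0$ and norm $Lip(f)=\sup_{x\neq y}\|f(x)-f(y)\|/\|x-y\|$; $L(X,Y)$ (bounded linear operators) is regarded as a subspace of it. For $x\in X$, $\delta_x^Y\in L(Lip_0(X,Y),Y)$ is evaluation $\delta_x^Y(f)=f(x)$. $F_Y(X)$ is the norm-closed linear span of $\{\delta_x^Y:x\in X\}$ in $L(Lip_0(X,Y),Y)$. $\beta_X^Y:F_Y(X)\to X$ is the bounded linear contraction with $\beta_X^Y(\sum_i\alpha_i\delta_{x_i}^Y)=\sum_i\alpha_ix_i$ on finite combinations, extended by continuity. *)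

(* Defs.v *)
From HB Require Import structures.
From mathcomp Require Import all_boot all_order all_algebra.
From mathcomp Require Import all_classical all_reals all_analysis.
Set Implicit Arguments. Unset Strict Implicit. Unset Printing Implicit Defensive.
Import Order.TTheory GRing.Theory Num.Theory.
Import numFieldNormedType.Exports.
Local Open Scope classical_set_scope.
Local Open Scope ring_scope.

Section LipFree.
Variables (R : realType) (X Y : normedModType R).

Definition lip0 (f : X -> Y) : Prop :=
  f 0 = 0 /\ exists k : R, forall x y : X, `|f x - f y| <= k * `|x - y|.

Definition lip0_ball (f : X -> Y) : Prop :=
  f 0 = 0 /\ forall x y : X, `|f x - f y| <= `|x - y|.

(* Elements of L(Lip_0(X,Y),Y) are represented as maps gamma : (X -> Y) -> Y;
   only their values on Lip_0(X,Y) are relevant. *)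

(* finite combination sum_i a_i delta_{x_i}, encoded by s = [:: (a_i, x_i)] *)
Definition delta_comb (s : seq (R * X)) : (X -> Y) -> Y :=
  fun f => \sum_(p <- s) p.1 *: f p.2.

(* its image under beta : sum_i a_i x_i *)
Definition beta_fin (s : seq (R * X)) : X := \sum_(p <- s) p.1 *: p.2.

(* operator-norm bound ||gamma - eta||_{L(Lip_0(X,Y),Y)} <= e *)
Definition opdist_le (gamma eta : (X -> Y) -> Y) (e : R) : Prop :=
  forall f, lip0_ball f -> `|gamma f - eta f| <= e.

Definition lin_on_lip0 (gamma : (X -> Y) -> Y) : Prop :=
  forall (a : R) (f g : X -> Y), lip0 f -> lip0 g ->
    gamma (fun x => a *: f x + g x) = a *: gamma f + gamma g.

(* gamma lies in F_Y(X): the norm closure in L(Lip_0(X,Y),Y) of the linear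
   span of the evaluations delta_x *)
Definition in_FY (gamma : (X -> Y) -> Y) : Prop :=
  lin_on_lip0 gamma /\
  forall e : R, 0 < e -> exists s : seq (R * X), opdist_le gamma (delta_comb s) e.

(* x is the value at gamma of the continuous extension of
   sum_i a_i delta_{x_i} |-> sum_i a_i x_i *)
Definition beta_value (gamma : (X -> Y) -> Y) (x : X) : Prop :=
  forall e : R, 0 < e -> exists2 d : R, 0 < d &
    forall s : seq (R * X), opdist_le gamma (delta_comb s) d ->
      `|x - beta_fin s| <= e.

Definition beta (gamma : (X -> Y) -> Y) : X := xget 0 (beta_value gamma).

End LipFree.

(* Main.v *)
Require Import Defs.
From HB Require Import structures.
From mathcomp Require Import all_boot all_order all_algebra.
From mathcomp Require Import all_classical all_reals all_analysis.
From mathcomp Require Import lra ring.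
Import Order.TTheory GRing.Theory Num.Theory.
Import numFieldNormedType.Exports.
Local Open Scope classical_set_scope.
Local Open Scope ring_scope.
Set Implicit Arguments. Unset Strict Implicit. Unset Printing Implicit Defensive.

Section HBsec.
Variables (R : realType) (X : normedModType R) (z : X).

Definition good (G : set (X * R)) : Prop :=
 [/\ (forall x a b, G (x,a) -> G (x,b) -> a = b),
     (forall c x y a b, G (x,a) -> G (y,b) -> G (c *: x + y, c * a + b)),
     (forall x a, G (x,a) -> a <= `|x|) &
     (forall p, G p -> G (z, `|z|))].

Lemma good_chain (F : set (set (X * R))) : F `<=` good -> total_on F subset ->
  good (\bigcup_(G in F) G).
Proof.
move=> Fg tot; split.
- move=> x a b [G1 FG1 h1] [G2 FG2 h2].
  have [s12|s21] := tot _ _ FG1 FG2.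
  + by case: (Fg _ FG2) => fu _ _ _; apply: fu (s12 _ h1) h2.
  + by case: (Fg _ FG1) => fu _ _ _; apply: fu h1 (s21 _ h2).
- move=> c x y a b [G1 FG1 h1] [G2 FG2 h2].
  have [s12|s21] := tot _ _ FG1 FG2.
  + by exists G2 => //; case: (Fg _ FG2) => _ li _ _; apply: li (s12 _ h1) h2.
  + by exists G1 => //; case: (Fg _ FG1) => _ li _ _; apply: li h1 (s21 _ h2).
- by move=> x a [G1 FG1 h1]; case: (Fg _ FG1) => _ _ d _; apply: d.
- by move=> p [G1 FG1 h1]; exists G1 => //; case: (Fg _ FG1) => _ _ _ e; apply: e h1.
Qed.

Definition G0 : set (X * R) := [set p | exists t : R, p = (t *: z, t * `|z|)].

Lemma good_G0 : good G0.
Proof.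
split.
- move=> x a b [t [-> ->]] [t' [e ->]].
  have [->|z0] := eqVneq z 0; first by rewrite normr0 !mulr0.
  suff -> : t = t' by [].
  have : (t - t') *: z = 0 by rewrite scalerBl e subrr.
  by move/eqP; rewrite scaler_eq0 (negPf z0) orbF subr_eq0 => /eqP.
- move=> c x y a b [t [-> ->]] [t' [-> ->]]; exists (c * t + t').
  by rewrite scalerDl scalerA mulrDl mulrA.
- move=> x a [t [-> ->]]; rewrite normrZ ler_wpM2r //; exact: ler_norm.
- by move=> p _; exists 1; rewrite scale1r mul1r.
Qed.

End HBsec.
Section HBsec2.
Variables (R : realType) (X : normedModType R) (z : X).

Section Ext.
Variables (A : set (X * R)) (gA : good z A) (Az : A (z, `|z|)).

Let fu := let: And4 f _ _ _ := gA in f.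
Let li := let: And4 _ f _ _ := gA in f.
Let dom := let: And4 _ _ f _ := gA in f.

Lemma A00 : A (0, 0).
Proof. by have := li (-1) Az Az; rewrite scaleN1r mulN1r !addNr. Qed.

Lemma AZ c x a : A (x, a) -> A (c *: x, c * a).
Proof. by move=> h; have := li c h A00; rewrite !addr0. Qed.

Lemma AD x y a b : A (x, a) -> A (y, b) -> A (x + y, a + b).
Proof. by move=> h1 h2; have := li 1 h1 h2; rewrite scale1r mul1r. Qed.

Lemma AB x y a b : A (x, a) -> A (y, b) -> A (y - x, b - a).
Proof. by move=> h1 h2; have := li (-1) h1 h2; rewrite scaleN1r mulN1r addrC [- a + _]addrC. Qed.

Variable (w : X) (nw : forall a, ~ A (w, a)).

Let S := [set r | exists y a, A (y, a) /\ r = a - `|y - w|].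

Let ubS x a : A (x, a) -> ubound S (`|x + w| - a).
Proof.
move=> h r [y [b [hy ->]]].
have := dom (AD hy h) => le1.
have : `|y + x| <= `|x + w| + `|y - w|.
  have -> : y + x = (x + w) + (y - w) by rewrite [RHS]addrCA addrK.
  exact: ler_normD.
lra.
Qed.

Let c := sup S.

Let hc1 y b : A (y, b) -> b - `|y - w| <= c.
Proof.
move=> h; apply: ub_le_sup; last by exists y, b.
by exists (`|0 + w| - 0); apply: ubS; exact: A00.
Qed.

Let hc2 x a : A (x, a) -> c <= `|x + w| - a.
Proof.
move=> h; apply: ge_sup; last exact: ubS.
by exists (0 - `|0 - w|), 0, 0; split => //; exact: A00.
Qed.

Definition B : set (X * R) :=
  [set p | exists x a t, A (x, a) /\ p = (x + t *: w, a + t * c)].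

Lemma dom_B x a t : A (x, a) -> a + t * c <= `|x + t *: w|.
Proof.
move=> h.
have [t0|tneg|->] := ltgtP t 0; last by rewrite mul0r scale0r !addr0; exact: dom.
- set s := - t.
  have s0 : 0 < s by rewrite /s oppr_gt0.
  have h1 := hc1 (AZ s^-1 h).
  have eN : `|x + t *: w| = s * `|s^-1 *: x - w|.
    rewrite -[s in s * _]gtr0_norm // -normrZ scalerBr scalerA mulfV ?gt_eqF //.
    by rewrite scale1r /s scaleNr opprK.
  have := ler_wpM2l (ltW s0) h1; rewrite mulrBr mulrA mulfV ?gt_eqF // mul1r.
  rewrite eN /s; lra.
- have h2 := hc2 (AZ t^-1 h).
  have eN : `|x + t *: w| = t * `|t^-1 *: x + w|.
    rewrite -[t in t * _]gtr0_norm // -normrZ scalerDr scalerA mulfV ?gt_eqF //.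
    by rewrite scale1r.
  have := ler_wpM2l (ltW tneg) h2; rewrite mulrBr mulrA mulfV ?gt_eqF // mul1r.
  rewrite eN; lra.
Qed.

Lemma good_B : good z B.
Proof.
split.
- move=> v b1 b2 [x [a [t [hx [ev ->]]]]] [x' [a' [t' [hx' [ev' ->]]]]].
  have [tt|tt] := eqVneq t t'.
    subst t'; have ex : x = x' by apply: (addIr (t *: w)); rewrite -ev -ev'.
    by subst x'; rewrite (fu hx hx').
  exfalso; have e1 : (t - t') *: w = x' - x.
    have ee : x + t *: w = x' + t' *: w by rewrite -ev -ev'.
    by rewrite scalerBl -[LHS](addKr x) [x + _]addrA ee addrK addrC.
  suff : A (w, (t - t')^-1 * (a' - a)) by apply: nw.
  have -> : w = (t - t')^-1 *: (x' - x).
    by rewrite -e1 scalerA mulVf ?scale1r // subr_eq0.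
  exact: AZ (AB hx hx').
- move=> d v u b1 b2 [x [a [t [hx [-> ->]]]]] [x' [a' [t' [hx' [-> ->]]]]].
  exists (d *: x + x'), (d * a + a'), (d * t + t'); split; first exact: li.
  congr (_, _).
    rewrite scalerDr scalerDl scalerA !addrA; congr (_ + _).
    by rewrite addrAC.
  ring.
- by move=> v b [x [a [t [hx [-> ->]]]]]; exact: dom_B.
- by move=> _ _; exists z, `|z|, 0; rewrite scale0r mul0r !addr0.
Qed.

Lemma AB_proper : A `<` B.
Proof.
split.
  by move=> [x a] h; exists x, a, 0; rewrite scale0r mul0r !addr0.
move=> /(_ (w, c)) h.
suff : A (w, c) by apply: nw.
apply: h; by exists 0, 0, 1; split; [exact: A00| rewrite scale1r mul1r !add0r].
Qed.

End Ext.
End HBsec2.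

Lemma hahn_banach (R : realType) (X : normedModType R) (z : X) :
  exists f : X -> R, (forall c x y, f (c *: x + y) = c * f x + f y) /\
    (forall x, `|f x| <= `|x|) /\ f z = `|z|.
Proof.
have [A [gA maxA]] := Zorn_bigcup (@good_chain R X z).
have Az : A (z, `|z|).
  have [[p Ap]|nA] := pselect (exists p, A p).
    by case: gA => _ _ _ /(_ p Ap).
  exfalso; apply: (maxA (G0 z)); last exact: good_G0.
  split; first by move=> p Ap; exfalso; apply: nA; exists p.
  move=> /(_ (z, `|z|)) h; apply: nA; exists (z, `|z|); apply: h.
  by exists 1; rewrite scale1r mul1r.
have tot x : exists a, A (x, a).
  apply: contrapT => nx.
  have nw : forall a, ~ A (x, a) by move=> a Ha; apply: nx; exists a.
  exact: (maxA _ (AB_proper gA Az nw) (good_B gA Az nw)).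
pose f x := xget 0 [set a | A (x, a)].
have hf x : A (x, f x) by apply: (@xgetPex _ 0 [set a | A (x, a)]); exact: tot.
case: gA => fu li dom _.
exists f; split; last split.
- by move=> c x y; apply: (fu _ _ _ (hf _)); apply: li; exact: hf.
- move=> x; rewrite ler_norml; apply/andP; split; last exact: dom (hf x).
  have := dom _ _ (AZ (And4 fu li dom (fun _ _ => Az)) Az (-1) (hf x)).
  by rewrite scaleN1r normrN mulN1r lerNl.
- exact: fu (hf z) Az.
Qed.

Lemma small0 (R : realType) (V : normedModType R) (v : V) :
  (forall e : R, 0 < e -> `|v| <= e) -> v = 0.
Proof.
move=> h; have [//|v0] := eqVneq v 0.
have hp : 0 < `|v| by rewrite normr_gt0.
have H := h (`|v| / 2) (divr_gt0 hp (ltr0Sn _ 1)).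
have : `|v| < `|v|.
  by apply: le_lt_trans H _; rewrite ltr_pdivrMr // ltr_pMr // ltr1n.
by rewrite ltxx.
Qed.

Section Main.
Variables (R : realType) (X Y : normedModType R) (y0 : Y) (y01 : `|y0| = 1).

Definition islin (T : X -> Y) := forall a u v, T (a *: u + v) = a *: T u + T v.

Lemma islin0 T : islin T -> T 0 = 0.
Proof.
move=> hT; have := hT 1 0 0; rewrite !scale1r addr0 => e.
by apply/esym/(addrI (T 0)); rewrite addr0 -e.
Qed.

Lemma islinB T u v : islin T -> T (u - v) = T u - T v.
Proof.
move=> hT; have := hT (-1) v u; rewrite !scaleN1r addrC => ->; exact: addrC.
Qed.

Lemma dc_lin s T : islin T -> delta_comb s T = T (beta_fin s).
Proof.
move=> hT; elim: s => [|[a x] s IH].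
  by rewrite /delta_comb /beta_fin !big_nil islin0.
rewrite /delta_comb /beta_fin in IH *; by rewrite !big_cons /= hT IH.
Qed.

Lemma normingT (x : X) : exists T : X -> Y, islin T /\ @lip0_ball R X Y T /\ `|T x| = `|x|.
Proof.
have [f [hf [hn hx]]] := hahn_banach x.
have fB u v : f (u - v) = f u - f v.
  by have := hf (-1) v u; rewrite scaleN1r mulN1r addrC => ->; rewrite addrC.
exists (fun u => f u *: y0); split; last split.
- by move=> a u v; rewrite hf scalerDl scalerA.
- split; first by have := fB 0 0; rewrite subrr => ->; rewrite subrr scale0r.
  by move=> u v; rewrite -scalerBl -fB normrZ y01 mulr1.
- by rewrite normrZ y01 mulr1 hx normr_id.
Qed.

Lemma islin_linear (T : X -> Y) : islin T -> linear T.
Proof. by move=> hT a u v; exact: hT. Qed.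

Lemma ball_cont (T : X -> Y) : lip0_ball T -> continuous T.
Proof.
move=> [_ hT] x; apply/cvgrPdist_lt => e e0.
apply/nbhs_ballP; exists e => // t; rewrite -ball_normE /= => hb.
exact: le_lt_trans (hT x t) hb.
Qed.

Lemma opdist_mono (g h : (X -> Y) -> Y) d d' :
  opdist_le g h d -> d <= d' -> opdist_le g h d'.
Proof. by move=> H dd f hf; apply: le_trans (H f hf) dd. Qed.

Variable gamma : (X -> Y) -> Y.

Lemma kb s t d d' : opdist_le gamma (delta_comb s) d ->
  opdist_le gamma (delta_comb t) d' -> `|beta_fin s - beta_fin t| <= d + d'.
Proof.
move=> hs ht.
have [T [hT [hb hx]]] := normingT (beta_fin s - beta_fin t).
have h1 := hs T hb; have h2 := ht T hb.
rewrite !dc_lin // in h1 h2.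
rewrite -hx islinB //.
have -> : T (beta_fin s) - T (beta_fin t) =
   (gamma T - T (beta_fin t)) - (gamma T - T (beta_fin s)).
  by rewrite opprB [RHS]addrC [RHS]addrA subrK.
apply: le_trans (ler_normB _ _) _; lra.
Qed.

End Main.

Section Wit.
Variables (R : realType) (X : completeNormedModType R) (Y : normedModType R).
Variables (y0 : Y) (y01 : `|y0| = 1) (gamma : (X -> Y) -> Y) (hF : in_FY gamma).

Lemma wit_ex : exists x, beta_value gamma x.
Proof.
case: hF => _ hF2.
have hs : forall n : nat, exists s, opdist_le gamma (delta_comb s) (n.+1%:R^-1).
  by move=> n; apply: hF2; rewrite invr_gt0 ltr0Sn.
have [sq hsq] := choice hs.
pose u n := beta_fin (sq n).
have hu m n : `|u m - u n| <= m.+1%:R^-1 + n.+1%:R^-1 := kb y01 (hsq m) (hsq n).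
have cu : cvg (u @ \oo).
  apply: cauchy_cvg; apply: cauchy_exP => eps eps0.
  have e2 : 0 < eps / 2 by rewrite divr_gt0.
  near \oo => N.
  have h1 : N.+1%:R^-1 < eps / 2 by near: N; exact: (near_infty_natSinv_lt (PosNum e2)).
  exists (u N).
  suff H : \forall n \near \oo, ball (u N) eps (u n) by exact: H.
  near=> n; rewrite -ball_normE /=.
  have h2 : n.+1%:R^-1 < eps / 2 by near: n; exact: (near_infty_natSinv_lt (PosNum e2)).
  apply: le_lt_trans (hu N n) _; rewrite [eps]splitr; exact: ltrD h1 h2.
exists (lim (u @ \oo)) => e e0.
set x := lim _.
have e2 : 0 < e / 2 by rewrite divr_gt0.
have e4 : 0 < e / 4 by rewrite divr_gt0.
exists (e / 2) => // s hs0.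
near \oo => n.
have h1 : `|x - u n| < e / 4 by near: n; exact: cvgr_dist_lt cu _ e4.
have h2 : n.+1%:R^-1 < e / 4 by near: n; exact: near_infty_natSinv_lt (PosNum e4).
have h3 := kb y01 (hsq n) hs0.
apply: le_trans (ler_distD (u n) _ _) _; apply: le_trans (lerD (ltW h1) h3) _.
move: h2; move: (n.+1%:R^-1) => c; lra.
Unshelve. all: by end_near.
Qed.

Lemma wit_unique x x' : beta_value gamma x -> beta_value gamma x' -> x = x'.
Proof.
move=> hx hx'; apply/eqP; rewrite -subr_eq0; apply/eqP/small0 => e e0.
have e2 : 0 < e / 2 by rewrite divr_gt0.
have [d d0 hd] := hx _ e2; have [d' d0' hd'] := hx' _ e2.
have md : 0 < Num.min d d' by rewrite lt_min d0 d0'.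
have [s hs] := hF.2 (Num.min d d') md.
have m1 : Num.min d d' <= d by rewrite ge_min lexx.
have m2 : Num.min d d' <= d' by rewrite ge_min lexx orbT.
have h1 := hd s (opdist_mono hs m1).
have h2 := hd' s (opdist_mono hs m2).
apply: le_trans (ler_distD (beta_fin s) x x') _; rewrite (distrC (beta_fin s)).
by rewrite [e]splitr; exact: lerD.
Qed.

End Wit.

Lemma cont_bound (R : realType) (X Y : normedModType R) (T : X -> Y) :
  islin T -> continuous T -> exists2 k, 0 < k & forall v, `|T v| <= k * `|v|.
Proof.
move=> hl hc.
have [del del0 hdel] := (nbhs_ballP _ _).1 (cvgr_dist_lt T (T 0) (hc 0) 1 ltr01).
exists (2 / del); first by rewrite divr_gt0.
move=> v; have [->|v0] := eqVneq v 0; first by rewrite islin0 // !normr0 mulr0.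
have nv : 0 < `|v| by rewrite normr_gt0.
set r := del / 2 / `|v|.
have r0 : 0 < r by rewrite /r !divr_gt0.
have hu : ball 0 del (r *: v).
  rewrite -ball_normE /= sub0r normrN normrZ gtr0_norm // /r divfK ?gt_eqF //.
  by rewrite ltr_pdivrMr // ltr_pMr // ltr1n.
have := hdel _ hu; rewrite /= islin0 // sub0r normrN.
have -> : T (r *: v) = r *: T v by have := hl r v 0; rewrite addr0 islin0 // addr0.
rewrite normrZ gtr0_norm // => h.
have -> : 2 / del * `|v| = r^-1 by rewrite /r; field; rewrite ?gt_eqF.
by rewrite -(ler_pM2l r0) mulfV ?gt_eqF // ltW.
Qed.

Unset Implicit Arguments. Set Strict Implicit.

Theorem mainTheorem12 (R : realType) (X Y : completeNormedModType R)
  (hY : exists y : Y, y != 0) (gamma : (X -> Y) -> Y) :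
  in_FY gamma ->
  ((forall T : X -> Y, linear T -> continuous T -> gamma T = 0) <->
   beta gamma = 0).
Proof.
move=> hF.
have [y yn0] := hY.
pose y0 := `|y|^-1 *: y.
have y01 : `|y0| = 1 by rewrite normrZ normfV normr_id mulVf // normr_eq0.
have [xw hxw] := wit_ex y01 hF.
have hb : beta_value gamma (beta gamma).
  by rewrite /beta; apply: xgetPex; exists xw.
split.
- move=> hT; apply: small0 => e e0.
  move: hb; set x := beta gamma => hb.
  have [T [hl [hball hTx]]] := normingT y01 x.
  have g0 : gamma T = 0 := hT T (islin_linear hl) (ball_cont hball).
  have e2 : 0 < e / 2 by rewrite divr_gt0.
  have [d d0 hd] := hb _ e2.
  have md : 0 < Num.min d (e / 2) by rewrite lt_min d0 e2.
  have [s hs] := hF.2 _ md.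
  have m1 : Num.min d (e / 2) <= d by rewrite ge_min lexx.
  have m2 : Num.min d (e / 2) <= e / 2 by rewrite ge_min lexx orbT.
  have h1 := hd s (opdist_mono hs m1).
  have h2 := opdist_mono hs m2 hball.
  rewrite g0 dc_lin // sub0r normrN in h2.
  rewrite -hTx.
  have := ler_distD (T (beta_fin s)) (T x) 0; rewrite !subr0 => h3.
  apply: le_trans h3 _; rewrite [e]splitr; apply: lerD => //.
  exact: le_trans (hball.2 _ _) h1.
- move=> hb0 T hlin hcont; rewrite hb0 in hb.
  have hl : islin T by move=> a u v; exact: hlin.
  have [k k0 hk] := cont_bound hl hcont.
  have lT : lip0 T.
    by split; [exact: islin0 | exists k => u v; rewrite -islinB //; exact: hk].
  pose T' := fun v => k^-1 *: T v.
  have hl' : islin T' by move=> a u v; rewrite /T' hl scalerDr !scalerA mulrC.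
  have hball' : lip0_ball T'.
    split; first by rewrite /T' islin0 // scaler0.
    move=> u v; rewrite /T' -scalerBr normrZ gtr0_norm ?invr_gt0 //.
    by rewrite ler_pdivrMl // -islinB //; exact: hk.
  have z0 : lip0 (fun _ : X => (0 : Y)).
    by split => //; exists 0 => u v; rewrite subrr normr0 mul0r.
  have gz : gamma (fun _ => 0) = 0.
    have := hF.1 1 _ _ z0 z0.
    have -> : (fun _ : X => 1 *: (0 : Y) + 0) = (fun _ => 0).
      by apply: funext => u; rewrite scale1r addr0.
    rewrite scale1r => e; apply/esym/(addrI (gamma (fun _ => 0))).
    by rewrite addr0 -e.
  have gT' : gamma T' = k^-1 *: gamma T.
    have := hF.1 k^-1 _ _ lT z0.
    have -> : (fun x => k^-1 *: T x + 0) = T' by apply: funext => u; rewrite addr0.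
    by rewrite gz addr0.
  have gT : gamma T = k *: gamma T'.
    by rewrite gT' scalerA mulfV ?gt_eqF // scale1r.
  apply: small0 => e e0.
  have f0 : 0 < e / k by rewrite divr_gt0.
  suff : `|gamma T'| <= e / k.
    by rewrite gT normrZ gtr0_norm // -ler_pdivlMl // mulrC.
  have e2 : 0 < e / k / 2 by rewrite divr_gt0.
  have [d d0 hd] := hb _ e2.
  have md : 0 < Num.min d (e / k / 2) by rewrite lt_min d0 e2.
  have [s hs] := hF.2 _ md.
  have m1 : Num.min d (e / k / 2) <= d by rewrite ge_min lexx.
  have m2 : Num.min d (e / k / 2) <= e / k / 2 by rewrite ge_min lexx orbT.
  have h1 := hd s (opdist_mono hs m1).
  have h2 := opdist_mono hs m2 hball'.
  rewrite dc_lin // in h2.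
  rewrite sub0r normrN in h1.
  have h3 : `|T' (beta_fin s)| <= `|beta_fin s|.
    by have := hball'.2 (beta_fin s) 0; rewrite hball'.1 !subr0.
  have := ler_distD (T' (beta_fin s)) (gamma T') 0; rewrite !subr0 => h4.
  apply: le_trans h4 _; rewrite [e / k]splitr; apply: lerD => //.
  exact: le_trans h3 h1.
Qed.
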